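(* Let $p$ be a probability rule for stochastic many-worlds theory satisfying Axioms (A1)–(A3). Then for every allowed state $v=\sum_n v_n\lvert n\rangle$ and every $n\ge0$, $p_n(v)=v_n$.
   Context: Stochastic many-worlds theory is defined as follows. The worlds are the vectors $\lvert n\rangle$, $n\in\{0,1,2,\dots\}$, of a countably infinite basis. The allowed states are the real vectors $v=\sum_n v_n\lvert n\rangle$ with $v_n\ge0$ for all $n$ and $\sum_n v_n=1$, where $v_n$ is the amplitude of world $n$. The allowed transformations are the linear maps $T$ with matrix elements $T_{ij}\ge0$ for all $i,j$ and $\sum_i T_{ij}=1$ for every $j$, acting by $(Tv)_i=\sum_j T_{ij}v_j$. A probability rule assigns to each allowed state $v$ a sequence $(p_n(v))_{n\ge 0}$ of nonnegative reals with $\sum_n p_n(v)=1$. The axioms are: (A1) Present state dependence: $p_n$ depends only on the present state $v$, so $p$ is a function of the state alone. (A2) Weak connection with amplitudes: for every allowed state $v$, $v_n=0$ implies $p_n(v)=0$. (A3) Weak connection with transformations: for every allowed state $v$ and allowed transformation $T$, and every partition of $\{0,1,2,\dots\}$ into subsets $\mathcal S_k$ such that $T_{ij}=0$ whenever $i$ and $j$ lie in different subsets, we have $\sum_{n\in\mathcal S_k}p_n(v)=\sum_{n\in\mathcal S_k}p_n(Tv)$ for every $k$. *)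

(* Defs.v *)
From Stdlib Require Import Reals Arith.
From Coquelicot Require Import Coquelicot.
Open Scope R_scope.

(* A vector in the world basis {|n>}: its sequence of real amplitudes. *)
Definition vec := nat -> R.

Definition allowed_state (v : vec) : Prop :=
  (forall n, 0 <= v n) /\ is_series v 1.

Definition allowed_transf (T : nat -> nat -> R) : Prop :=
  (forall i j, 0 <= T i j) /\ (forall j, is_series (fun i => T i j) 1).

(* Action (T v)_i = sum_j T_ij v_j  (the series converges for allowed T, v). *)
Definition act (T : nat -> nat -> R) (v : vec) : vec :=
  fun i => Series (fun j => T i j * v j).

(* A probability rule (A1: a function of the present state only):
   to each allowed state it assigns a nonnegative sequence summing to 1. *)
Definition prob_rule (p : vec -> nat -> R) : Prop :=
  forall v, allowed_state v -> (forall n, 0 <= p v n) /\ is_series (p v) 1.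

Definition weak_amp (p : vec -> nat -> R) : Prop :=
  forall v, allowed_state v -> forall n, v n = 0 -> p v n = 0.

Definition block_sum (q : nat -> R) (c : nat -> nat) (k : nat) : R :=
  Series (fun n => if Nat.eqb (c n) k then q n else 0).

(* (A3): partitions of N are encoded by a block-labelling c : nat -> nat
   (S_k = { n | c n = k }); every partition of N arises this way since it
   has at most countably many nonempty blocks. *)
Definition weak_transf (p : vec -> nat -> R) : Prop :=
  forall v T (c : nat -> nat),
    allowed_state v -> allowed_transf T ->
    (forall i j, c i <> c j -> T i j = 0) ->
    forall k, block_sum (p v) c k = block_sum (p (act T v)) c k.

(* Main.v *)
Require Import Defs.
From Stdlib Require Import Reals Lra Lia ZArith FunctionalExtensionality.
From Coquelicot Require Import Coquelicot.
Open Scope R_scope.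
Definition delta (a : nat) (c : R) : nat -> R := fun j => if Nat.eqb j a then c else 0.

Lemma sum_delta a c N : sum_n (delta a c) N = if Nat.leb a N then c else 0.
Proof.
  induction N.
  - rewrite sum_O. unfold delta. destruct a; simpl; reflexivity.
  - rewrite sum_Sn, IHN. unfold delta. change plus with Rplus.
    destruct (Nat.leb_spec a N); destruct (Nat.leb_spec a (S N)); destruct (Nat.eqb_spec (S N) a); try lia; lra.
Qed.

Lemma delta_series a c : is_series (delta a c) c.
Proof.
  unfold is_series. apply filterlim_ext_loc with (fun _ => c).
  - exists a. intros N HN. rewrite sum_delta. destruct (Nat.leb_spec a N); try lia; reflexivity.
  - apply filterlim_const.
Qed.

Lemma series_plusR (a b : nat -> R) la lb : is_series a la -> is_series b lb ->
  is_series (fun n => a n + b n) (la + lb).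
Proof. intros; now apply (is_series_plus a b). Qed.
Lemma series_minusR (a b : nat -> R) la lb : is_series a la -> is_series b lb ->
  is_series (fun n => a n - b n) (la - lb).
Proof. intros H1 H2. exact (is_series_minus a b la lb H1 H2). Qed.
Lemma series_nonneg (a : nat -> R) l : (forall n, 0 <= a n) -> is_series a l -> 0 <= l.
Proof.
  intros H1 H2. rewrite <- (is_series_unique _ _ H2).
  replace 0 with (Series (fun _ => 0)). apply Series_le. intros; split; [lra|auto].
  exists l; auto. apply is_series_unique. apply is_series_ext with (delta 0 0).
  intros; unfold delta; destruct (Nat.eqb n 0); auto. apply delta_series.
Qed.

Lemma Rdiv_le_0_compat a b : 0 <= a -> 0 < b -> 0 <= a / b.
Proof. intros. unfold Rdiv. apply Rmult_le_pos; auto. left; apply Rinv_0_lt_compat; auto. Qed.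

Lemma nat_floor (r : R) : 0 <= r -> exists k : nat, INR k <= r < INR k + 1.
Proof.
  intros Hr. destruct (base_Int_part r) as [H1 H2].
  assert (Hz : (0 <= Int_part r)%Z).
  { apply le_IZR. apply lt_IZR in H2 || idtac.
    assert (IZR (Int_part r) > -1) by lra.
    assert (-1 < Int_part r)%Z by (apply lt_IZR; simpl; lra). apply IZR_le. lia. }
  exists (Z.to_nat (Int_part r)). rewrite INR_IZR_INZ, Z2Nat.id by exact Hz. lra.
Qed.

Lemma cauchy (f : R -> R) :
  (forall x, 0 <= x <= 1 -> 0 <= f x) ->
  (forall x y, 0 <= x -> 0 <= y -> x + y <= 1 -> f x + f y = f (x + y)) ->
  f 1 = 1 -> forall x, 0 <= x <= 1 -> f x = x.
Proof.
  intros Hpos Hadd H1.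
  assert (H0 : f 0 = 0). { pose proof (Hadd 0 0). rewrite Rplus_0_r in H. lra. }
  assert (Hmono : forall x y, 0 <= x -> x <= y -> y <= 1 -> f x <= f y).
  { intros x y Hx Hxy Hy. replace y with (x + (y - x)) by ring.
    rewrite <- Hadd by lra. assert (0 <= f (y - x)) by (apply Hpos; lra). lra. }
  assert (Hmul : forall N, (0 < N)%nat -> forall k, (k <= N)%nat ->
            f (INR k / INR N) = INR k * f (1 / INR N)).
  { intros N HN. assert (HN' : 0 < INR N) by (apply lt_0_INR; lia).
    induction k as [|k IH]; intros Hk.
    - simpl. unfold Rdiv. rewrite Rmult_0_l. rewrite H0. ring.
    - assert (HkN : INR (S k) <= INR N) by (apply le_INR; lia).
      rewrite S_INR in HkN |- *.
      replace ((INR k + 1) / INR N) with (INR k / INR N + 1 / INR N) by (field; lra).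
      assert (Hk0 : 0 <= INR k) by apply pos_INR.
      assert (0 <= INR k / INR N) by (apply Rdiv_le_0_compat; lra).
      assert (0 <= 1 / INR N) by (apply Rdiv_le_0_compat; lra).
      assert (INR k / INR N + 1 / INR N <= 1).
      { replace (INR k / INR N + 1 / INR N) with ((INR k + 1) / INR N) by (field; lra).
        apply Rmult_le_reg_r with (INR N); auto. field_simplify; lra. }
      rewrite <- Hadd by lra. rewrite IH by lia. ring. }
  assert (Hfrac : forall N, (0 < N)%nat -> forall k, (k <= N)%nat ->
            f (INR k / INR N) = INR k / INR N).
  { intros N HN k Hk. assert (HN' : 0 < INR N) by (apply lt_0_INR; lia).
    pose proof (Hmul N HN N (le_n _)) as HH.
    replace (INR N / INR N) with 1 in HH by (field; lra).
    assert (f (1 / INR N) = / INR N).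
    { apply Rmult_eq_reg_l with (INR N); [|lra]. rewrite <- HH, H1. field; lra. }
    rewrite Hmul by auto. rewrite H. unfold Rdiv. ring. }
  intros x Hx.
  assert (Hb : forall N, (0 < N)%nat -> Rabs (f x - x) <= / INR N).
  { intros N HN. assert (HN' : 0 < INR N) by (apply lt_0_INR; lia).
    destruct (nat_floor (x * INR N)) as [k [Hk1 Hk2]]. { apply Rmult_le_pos; lra. }
    assert (Hk1' : INR k / INR N <= x).
    { apply Rmult_le_reg_r with (INR N); auto. field_simplify; lra. }
    assert (Hk2' : x < (INR k + 1) / INR N).
    { apply Rmult_lt_reg_r with (INR N); auto. field_simplify; lra. }
    assert (HkN : (k <= N)%nat).
    { apply INR_le. assert (x * INR N <= INR N) by nra. lra. }
    assert (Hlow : INR k / INR N <= f x).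
    { rewrite <- Hfrac by auto. apply Hmono; try lra.
      apply Rdiv_le_0_compat; [apply pos_INR|lra]. }
    assert (Hup : f x <= x + / INR N).
    { destruct (Nat.eq_dec k N) as [->|Hne].
      - assert (x = 1). { replace (INR N / INR N) with 1 in Hk1' by (field; lra). lra. }
        subst. rewrite H1. assert (0 < / INR N) by (apply Rinv_0_lt_compat; lra). lra.
      - assert (HS : (S k <= N)%nat) by lia.
        pose proof (Hfrac N HN (S k) HS) as HF. rewrite S_INR in HF.
        assert (f x <= f ((INR k + 1) / INR N)).
        { apply Hmono; try lra. apply le_INR in HS. rewrite S_INR in HS.
          apply Rmult_le_reg_r with (INR N); auto. field_simplify; lra. }
        assert ((INR k + 1) / INR N <= x + / INR N).
        { apply Rmult_le_reg_r with (INR N); auto. field_simplify; lra. }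
        lra. }
    assert (x - / INR N <= INR k / INR N).
    { apply Rmult_le_reg_r with (INR N); auto. field_simplify; lra. }
    apply Rabs_le. lra. }
  destruct (Req_dec (f x) x) as [E|E]; auto. exfalso.
  assert (Hd : 0 < Rabs (f x - x)) by (apply Rabs_pos_lt; lra).
  destruct (archimed_cor1 _ Hd) as [N [HN1 HN2]].
  pose proof (Hb N HN2). lra.
Qed.

Ltac eqbs := repeat match goal with |- context [Nat.eqb ?a ?b] => destruct (Nat.eqb_spec a b) end.

Definition u (n : nat) (x : R) : vec := fun i => delta n x i + delta (S n) (1 - x) i.

Lemma allowed_u n x : 0 <= x <= 1 -> allowed_state (u n x).
Proof.
  intros Hx. split.
  - intros i. unfold u, delta. eqbs; lra.
  - replace 1 with (x + (1 - x)) by ring. apply series_plusR; apply delta_series.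
Qed.

Lemma le1 v n : allowed_state v -> 0 <= v n <= 1.
Proof.
  intros [Hp Hs]. split; auto.
  assert (H := series_minusR _ _ _ _ Hs (delta_series n (v n))).
  apply series_nonneg in H. lra.
  intros j. unfold delta. specialize (Hp j). eqbs; try lra. subst; lra.
Qed.

Lemma series_val (a b : nat -> R) l : (forall j, b j = a j) -> is_series b l -> Series a = l.
Proof. intros E H. apply is_series_unique. eapply is_series_ext; [exact E|exact H]. Qed.

Lemma lemA p : prob_rule p -> weak_transf p ->
  forall v n, allowed_state v -> p v n = p (u n (v n)) n.
Proof.
  intros Hp Ht v n Hv.
  set (T := fun i j : nat => if Nat.eqb j n then (if Nat.eqb i n then 1 else 0)
                             else (if Nat.eqb i (S n) then 1 else 0)).
  set (c := fun i : nat => if Nat.eqb i n then 0%nat else 1%nat).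
  assert (HT : allowed_transf T).
  { split. intros i j; unfold T; eqbs; lra.
    intros j. unfold T. destruct (Nat.eqb_spec j n).
    - apply is_series_ext with (delta n 1). intros i; unfold delta; eqbs; lia || lra.
      apply delta_series.
    - apply is_series_ext with (delta (S n) 1). intros i; unfold delta; eqbs; lia || lra.
      apply delta_series. }
  assert (Hc : forall i j, c i <> c j -> T i j = 0).
  { intros i j H. unfold c, T in *. revert H. eqbs; intros; try lia; lra. }
  assert (Hact : act T v = u n (v n)).
  { apply functional_extensionality. intros i. unfold act.
    destruct (le1 v n Hv) as [Hv0 Hv1].
    destruct (Nat.eqb_spec i n) as [->|Hin].
    - apply series_val with (delta n (v n)). intros j; unfold T, delta; eqbs; try lia; subst; lra.
      replace (u n (v n) n) with (v n). apply delta_series. unfold u, delta; eqbs; lia || lra.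
    - destruct (Nat.eqb_spec i (S n)) as [->|HiS].
      + apply series_val with (fun j => v j - delta n (v n) j).
        intros j; unfold T, delta; eqbs; try lia; try lra. subst; lra.
        replace (u n (v n) (S n)) with (1 - v n). apply series_minusR. apply Hv. apply delta_series.
        unfold u, delta; eqbs; lia || lra.
      + apply series_val with (delta 0 0). intros j; unfold T, delta; eqbs; try lia; subst; lra.
        replace (u n (v n) i) with 0. apply delta_series. unfold u, delta; eqbs; lia || lra. }
  assert (Hbs : forall q, block_sum q c 0 = q n).
  { intros q. unfold block_sum. apply series_val with (delta n (q n)).
    intros j; unfold c, delta; eqbs; simpl; try lia; subst; reflexivity.
    apply delta_series. }
  pose proof (Ht v T c Hv HT Hc 0%nat) as H. rewrite !Hbs, Hact in H. exact H.
Qed.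

Lemma lemA' p : prob_rule p -> weak_transf p ->
  forall v n x, allowed_state v -> v n = x -> p v n = p (u n x) n.
Proof. intros; subst; apply lemA; auto. Qed.

Lemma merge p : prob_rule p -> weak_amp p -> weak_transf p ->
  forall n m x y, n <> m -> 0 <= x -> 0 <= y -> x + y <= 1 ->
  p (u n x) n + p (u m y) m = p (u n (x + y)) n.
Proof.
  intros Hp Ha Ht n m x y Hnm Hx Hy Hxy.
  set (k := S (n + m)).
  assert (Hkn : k <> n) by (unfold k; lia).
  assert (Hkm : k <> m) by (unfold k; lia).
  set (w := fun i => delta n x i + delta m y i + delta k (1 - x - y) i).
  set (w' := fun i => delta n (x + y) i + delta k (1 - x - y) i).
  assert (Hw : allowed_state w).
  { split. intros i; unfold w, delta; eqbs; lra.
    replace 1 with (x + y + (1 - x - y)) by ring.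
    apply series_plusR; [apply series_plusR|]; apply delta_series. }
  assert (Hw' : allowed_state w').
  { split. intros i; unfold w', delta; eqbs; lra.
    replace 1 with (x + y + (1 - x - y)) by ring.
    apply series_plusR; apply delta_series. }
  set (T := fun i j : nat => if Nat.eqb j m then (if Nat.eqb i n then 1 else 0)
                             else (if Nat.eqb i j then 1 else 0)).
  set (c := fun i : nat => if (Nat.eqb i n || Nat.eqb i m)%bool then 0%nat else 1%nat).
  assert (HT : allowed_transf T).
  { split. intros i j; unfold T; eqbs; lra.
    intros j. unfold T. destruct (Nat.eqb_spec j m).
    - apply is_series_ext with (delta n 1). intros i; unfold delta; eqbs; lia || lra.
      apply delta_series.
    - apply is_series_ext with (delta j 1). intros i; unfold delta; eqbs; try lia; subst; lra.
      apply delta_series. }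
  assert (Hc : forall i j, c i <> c j -> T i j = 0).
  { intros i j H. unfold c, T in *. revert H. eqbs; simpl; intros; try lia; lra. }
  assert (Hact : act T w = w').
  { apply functional_extensionality. intros i. unfold act.
    apply series_val with (fun j => (if Nat.eqb i n then delta n x j + delta m y j else 0)
                                  + (if Nat.eqb i k then delta k (1 - x - y) j else 0)).
    { intros j; unfold T, w, delta; eqbs; try lia; subst; lra. }
    replace (w' i) with ((if Nat.eqb i n then x + y else 0) + (if Nat.eqb i k then 1 - x - y else 0)).
    2:{ unfold w', delta; eqbs; try lia; subst; lra. }
    apply series_plusR.
    - destruct (Nat.eqb i n). apply series_plusR; apply delta_series.
      apply is_series_ext with (delta 0 0). intros; unfold delta; eqbs; lra. apply delta_series.
    - destruct (Nat.eqb i k). apply delta_series.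
      apply is_series_ext with (delta 0 0). intros; unfold delta; eqbs; lra. apply delta_series. }
  assert (Hbs : forall q, block_sum q c 0 = q n + q m).
  { intros q. unfold block_sum. apply series_val with (fun j => delta n (q n) j + delta m (q m) j).
    intros j; unfold c, delta; destruct (Nat.eqb_spec j n); destruct (Nat.eqb_spec j m); simpl; eqbs; try lia; subst; lra.
    apply series_plusR; apply delta_series. }
  pose proof (Ht w T c Hw HT Hc 0%nat) as H. rewrite !Hbs, Hact in H.
  rewrite (lemA' p Hp Ht w n x Hw), (lemA' p Hp Ht w m y Hw) in H
    by (unfold w, delta; eqbs; try lia; lra).
  rewrite (lemA' p Hp Ht w' n (x + y) Hw') in H by (unfold w', delta; eqbs; try lia; lra).
  rewrite (Ha w' Hw' m) in H by (unfold w', delta; eqbs; try lia; lra).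
  lra.
Qed.

Theorem theorem4 (p : vec -> nat -> R) :
  prob_rule p -> weak_amp p -> weak_transf p ->
  forall v : vec, allowed_state v -> forall n : nat, p v n = v n.
Proof.
  intros Hp Ha Ht v Hv n.
  set (G := fun n x => p (u n x) n).
  assert (G0 : forall n, G n 0 = 0).
  { intros m. unfold G. apply Ha. apply allowed_u; lra. unfold u, delta; eqbs; try lia; lra. }
  assert (Geq : forall n m y, n <> m -> 0 <= y <= 1 -> G m y = G n y).
  { intros a b y Hab Hy. assert (H := merge p Hp Ha Ht a b 0 y Hab ltac:(lra) ltac:(lra) ltac:(lra)).
    replace (0 + y) with y in H by ring. pose proof (G0 a) as Z. unfold G in *. lra. }
  assert (G1 : G 0%nat 1 = 1).
  { unfold G. assert (Hu : allowed_state (u 0 1)) by (apply allowed_u; lra).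
    destruct (Hp _ Hu) as [_ Hs].
    apply is_series_unique in Hs. rewrite <- Hs at 2. symmetry.
    apply series_val with (delta 0 (p (u 0%nat 1) 0%nat)).
    - intros j. unfold delta. destruct (Nat.eqb_spec j 0) as [->|Hj]; auto.
      symmetry. apply Ha; auto. unfold u, delta; eqbs; try lia; lra.
    - apply delta_series. }
  assert (Hf : forall x, 0 <= x <= 1 -> G 0%nat x = x).
  { apply cauchy.
    - intros x Hx. unfold G. apply (Hp _ (allowed_u 0 x Hx)).
    - intros x y Hx Hy Hxy. pose proof (Geq 0%nat 1%nat y ltac:(lia) ltac:(lra)) as E. unfold G in *. rewrite <- E.
      unfold G. apply (merge p Hp Ha Ht); auto.
    - exact G1. }
  pose proof (le1 v n Hv) as Hvn.
  rewrite (lemA p Hp Ht v n Hv). fold (G n (v n)).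
  destruct (Nat.eq_dec n 0) as [->|Hn]. apply Hf; auto.
  rewrite (Geq 0%nat n) by (lia || lra). apply Hf; auto.
Qed.
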